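(* Let $\kappa=0$ and $c=\cos\alpha\ge 0$. Then for every $g\in SO(3)$ there is an optimal decomposition of $g$ which is a subword of one of the following patterns, or of an image of one of them under the group $(X,Y)\mapsto(\pm X,\pm Y)$: (IX) $R(\pi Y)\,R(tW_+)\,R(\pi Y)$ with $t\ge0$; (X) $R(\pi Y)\,R(tW_+)\,R(-\pi Y)$ with $t\ge 0$. (Here $W_+=W_-=X-cY$.)
   Context: Fix unit vectors $X,Y\in\mathbb R^3$ with angle $\alpha\in(0,\pi/2]$, $c=\cos\alpha$, and $\kappa\in[0,1]$. For a unit vector $v$, $R(tv)\in SO(3)$ is rotation by angle $t$ about $v$ (counterclockwise viewed from the tip): $R(tv)=\cos t\,I+\sin t\,[v]_\times+(1-\cos t)vv^T$; for nonzero non-unit $v$, $R(tv):=R((t|v|)\,v/|v|)$. For nonzero $C=aX+bY$, $\mathrm{cost}(C)=|a|+\kappa|b|$. A decomposition of $g\in SO(3)$ is a finite product $g=R(\tau_1C_1)\cdots R(\tau_nC_n)$ with $\tau_j\ge0$, $C_j$ nonzero in $\mathrm{span}\{X,Y\}$ (a factor $R(-\tau C)$, $\tau\ge0$, means $R(\tau(-C))$), with cost $\sum\tau_j\mathrm{cost}(C_j)$. Problem 1: minimize the cost over all decompositions of $g$; a decomposition is optimal if its cost equals the infimum. $W_+=(1+\kappa c)X-(\kappa+c)Y$, $W_-=(1-\kappa c)X+(\kappa-c)Y$. Subword: for a word $R(\tau_1C_1)\cdots R(\tau_nC_n)$ ($\tau_j\ge0$), a subword is $R(\tau_k'C_k)R(\tau_{k+1}C_{k+1})\cdots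 R(\tau_{m-1}C_{m-1})R(\tau_m'C_m)$ with $1\le k\le m\le n$, $0\le\tau_k'\le\tau_k$, $0\le\tau_m'\le\tau_m$. Symmetries: with labels $\pm X,\pm Y,\pm W_\pm$, let $\nu:C\mapsto-C$ and $\rho:X\mapsto X,\ Y\mapsto-Y,\ W_+\mapsto W_-,\ W_-\mapsto W_+$ (extended by $\rho(-C)=-\rho(C)$); applying them replaces each label by its image and keeps the times. ''Under $(X,Y)\mapsto(\pm X,\pm Y)$'' means images under the group $\{\mathrm{id},\nu,\rho,\nu\rho\}$. *)

(* Defs.v *)
From Stdlib Require Import Reals List.
Import ListNotations.
Open Scope R_scope.

Record vec := mkVec { v1 : R; v2 : R; v3 : R }.

Record mat := mkMat {
  m11 : R; m12 : R; m13 : R;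
  m21 : R; m22 : R; m23 : R;
  m31 : R; m32 : R; m33 : R }.

Definition vadd (u v : vec) : vec := mkVec (v1 u + v1 v) (v2 u + v2 v) (v3 u + v3 v).
Definition vscale (k : R) (v : vec) : vec := mkVec (k * v1 v) (k * v2 v) (k * v3 v).
Definition vzero : vec := mkVec 0 0 0.
Definition dot (u v : vec) : R := v1 u * v1 v + v2 u * v2 v + v3 u * v3 v.
Definition vnorm (v : vec) : R := sqrt (dot v v).

Definition mat_id : mat := mkMat 1 0 0 0 1 0 0 0 1.

Definition mat_mul (A B : mat) : mat :=
  mkMat
    (m11 A * m11 B + m12 A * m21 B + m13 A * m31 B)
    (m11 A * m12 B + m12 A * m22 B + m13 A * m32 B)
    (m11 A * m13 B + m12 A * m23 B + m13 A * m33 B)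
    (m21 A * m11 B + m22 A * m21 B + m23 A * m31 B)
    (m21 A * m12 B + m22 A * m22 B + m23 A * m32 B)
    (m21 A * m13 B + m22 A * m23 B + m23 A * m33 B)
    (m31 A * m11 B + m32 A * m21 B + m33 A * m31 B)
    (m31 A * m12 B + m32 A * m22 B + m33 A * m32 B)
    (m31 A * m13 B + m32 A * m23 B + m33 A * m33 B).

Definition transp (A : mat) : mat :=
  mkMat (m11 A) (m21 A) (m31 A) (m12 A) (m22 A) (m32 A) (m13 A) (m23 A) (m33 A).

Definition det (A : mat) : R :=
  m11 A * (m22 A * m33 A - m23 A * m32 A)
  - m12 A * (m21 A * m33 A - m23 A * m31 A)
  + m13 A * (m21 A * m32 A - m22 A * m31 A).

Definition in_SO3 (g : mat) : Prop := mat_mul (transp g) g = mat_id /\ det g = 1.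

(** R(t u) for a unit vector u:
    cos t I + sin t [u]_x + (1 - cos t) u u^T. *)
Definition rot_unit (t : R) (u : vec) : mat :=
  let c := cos t in let s := sin t in let d := 1 - cos t in
  let x := v1 u in let y := v2 u in let z := v3 u in
  mkMat
    (c + d * x * x)      (- s * z + d * x * y) (s * y + d * x * z)
    (s * z + d * y * x)  (c + d * y * y)       (- s * x + d * y * z)
    (- s * y + d * z * x) (s * x + d * z * y)  (c + d * z * z).

Definition rot (t : R) (v : vec) : mat :=
  rot_unit (t * vnorm v) (vscale (/ vnorm v) v).

(** A letter (tau, (a, b)) stands for the factor R(tau C) with C = aX + bY. *)
Definition letter := (R * (R * R))%type.
Definition word := list letter.

Definition lin (X Y : vec) (a b : R) : vec := vadd (vscale a X) (vscale b Y).

Definition eval_word (X Y : vec) (w : word) : mat :=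
  fold_right (fun l M => mat_mul (rot (fst l) (lin X Y (fst (snd l)) (snd (snd l)))) M)
    mat_id w.

Definition cost_word (kappa : R) (w : word) : R :=
  fold_right (fun l s => fst l * (Rabs (fst (snd l)) + kappa * Rabs (snd (snd l))) + s) 0 w.

Definition is_decomposition (X Y : vec) (g : mat) (w : word) : Prop :=
  (forall l, In l w -> 0 <= fst l /\ lin X Y (fst (snd l)) (snd (snd l)) <> vzero)
  /\ eval_word X Y w = g.

Definition optimal (kappa : R) (X Y : vec) (g : mat) (w : word) : Prop :=
  is_decomposition X Y g w /\
  forall w', is_decomposition X Y g w' -> cost_word kappa w <= cost_word kappa w'.

(** Subwords R(tau_k' C_k) R(tau_{k+1} C_{k+1}) ... R(tau_{m-1} C_{m-1}) R(tau_m' C_m);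
    for k = m this is the single factor R(tau' C_k), 0 <= tau' <= tau_k. *)
Definition subword {A : Type} (s w : list (R * A)) : Prop :=
  (exists l1 l2 t C t',
      w = l1 ++ (t, C) :: l2 /\ 0 <= t' <= t /\ s = [(t', C)]) \/
  (exists l1 mid l2 tk Ck tm Cm tk' tm',
      w = l1 ++ (tk, Ck) :: mid ++ (tm, Cm) :: l2 /\
      0 <= tk' <= tk /\ 0 <= tm' <= tm /\
      s = (tk', Ck) :: mid ++ [(tm', Cm)]).

(** Labels +-X, +-Y, +-W_+, +-W_-. The boolean is true for the negated label. *)
Inductive base := BX | BY | BWp | BWm.
Definition label := (bool * base)%type.

Definition base_coeffs (kappa c : R) (b : base) : R * R :=
  match b with
  | BX => (1, 0)
  | BY => (0, 1)
  | BWp => (1 + kappa * c, - (kappa + c))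
  | BWm => (1 - kappa * c, kappa - c)
  end.

Definition label_coeffs (kappa c : R) (l : label) : R * R :=
  let '(neg, b) := l in
  let '(a, bb) := base_coeffs kappa c b in
  if neg then (- a, - bb) else (a, bb).

Definition nu (l : label) : label := (negb (fst l), snd l).
Definition rho (l : label) : label :=
  let '(neg, b) := l in
  match b with
  | BX => (neg, BX)
  | BY => (negb neg, BY)
  | BWp => (neg, BWm)
  | BWm => (neg, BWp)
  end.

Definition sym_group : list (label -> label) :=
  [(fun l => l); nu; rho; (fun l => nu (rho l))].

Definition pattern := list (R * label).

Definition apply_sym (f : label -> label) (p : pattern) : pattern :=
  map (fun x => (fst x, f (snd x))) p.

Definition interp (kappa c : R) (p : pattern) : word :=
  map (fun x => (fst x, label_coeffs kappa c (snd x))) p.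

Definition patternIX (t : R) : pattern := [(PI, (false, BY)); (t, (false, BWp)); (PI, (false, BY))].
Definition patternX (t : R) : pattern := [(PI, (false, BY)); (t, (false, BWp)); (PI, (true, BY))].

(* Main.v *)
Require Import Defs.
From Stdlib Require Import Reals List Lra Nsatz Psatz.
Import ListNotations.
Open Scope R_scope.


Definition cross (u v : vec) : vec :=
  mkVec (v2 u * v3 v - v3 u * v2 v) (v3 u * v1 v - v1 u * v3 v) (v1 u * v2 v - v2 u * v1 v).
Definition mv (M : mat) (v : vec) : vec :=
  mkVec (m11 M * v1 v + m12 M * v2 v + m13 M * v3 v)
        (m21 M * v1 v + m22 M * v2 v + m23 M * v3 v)
        (m31 M * v1 v + m32 M * v2 v + m33 M * v3 v).
Definition comb (e1 e2 e3 : vec) (x1 x2 x3 : R) : vec :=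
  vadd (vscale x1 e1) (vadd (vscale x2 e2) (vscale x3 e3)).

Lemma vec_eq (a b : vec) : v1 a = v1 b -> v2 a = v2 b -> v3 a = v3 b -> a = b.
Proof. destruct a, b; simpl; intros; subst; reflexivity. Qed.

Lemma mat_ext (M N : mat) : (forall v, mv M v = mv N v) -> M = N.
Proof.
  intros H. pose proof (H (mkVec 1 0 0)) as H1. pose proof (H (mkVec 0 1 0)) as H2.
  pose proof (H (mkVec 0 0 1)) as H3. destruct M, N; unfold mv in *; simpl in *.
  injection H1; injection H2; injection H3; intros. f_equal; lra.
Qed.

Lemma mv_mul A B v : mv (mat_mul A B) v = mv A (mv B v).
Proof. apply vec_eq; destruct A, B, v; simpl; ring. Qed.
Lemma mv_id v : mv mat_id v = v.
Proof. apply vec_eq; destruct v; simpl; ring. Qed.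
Lemma mat_mul_id_r M : mat_mul M mat_id = M.
Proof. destruct M; unfold mat_mul; simpl; f_equal; ring. Qed.
Lemma det_mul A B : det (mat_mul A B) = det A * det B.
Proof. destruct A, B; unfold det, mat_mul; simpl; ring. Qed.

Lemma mv_comb M e1 e2 e3 x1 x2 x3 :
  mv M (comb e1 e2 e3 x1 x2 x3) = comb (mv M e1) (mv M e2) (mv M e3) x1 x2 x3.
Proof. apply vec_eq; destruct M, e1, e2, e3; simpl; ring. Qed.

Definition isom (M : mat) := (forall p q, dot (mv M p) (mv M q) = dot p q) /\ det M = 1.

Lemma isom_mul A B : isom A -> isom B -> isom (mat_mul A B).
Proof.
  intros [HA dA] [HB dB]; split.
  - intros; rewrite !mv_mul, HA, HB; reflexivity.
  - rewrite det_mul, dA, dB; ring.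
Qed.

Lemma rot_dot (phi : R) (u p q : vec) : dot u u = 1 ->
  dot (mv (rot_unit phi u) p) (mv (rot_unit phi u) q) = dot p q.
Proof.
  intros Hu. pose proof (sin2_cos2 phi) as Hs. unfold Rsqr in Hs.
  destruct u as [x y z], p as [p1 p2 p3], q as [q1 q2 q3]. unfold dot, mv, rot_unit in *; simpl in *.
  set (C := cos phi) in *. set (S := sin phi) in *. nsatz.
Qed.
Lemma rot_det (phi : R) (u : vec) : dot u u = 1 -> det (rot_unit phi u) = 1.
Proof.
  intros Hu. pose proof (sin2_cos2 phi) as Hs. unfold Rsqr in Hs.
  destruct u as [x y z]. unfold dot, det, rot_unit in *; simpl in *.
  set (C := cos phi) in *. set (S := sin phi) in *. nsatz.
Qed.
Lemma isom_rot phi u : dot u u = 1 -> isom (rot_unit phi u).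
Proof. intros; split; [intros; apply rot_dot | apply rot_det]; auto. Qed.

Lemma isom_SO3 g : in_SO3 g -> isom g.
Proof.
  intros [H D]; split; auto. intros p q.
  assert (E : dot (mv g p) (mv g q) = dot p (mv (mat_mul (transp g) g) q)).
  { destruct g, p, q; unfold dot, mv, mat_mul, transp; simpl; ring. }
  rewrite E, H, mv_id; reflexivity.
Qed.

Lemma complete (a b v : vec) : dot a a = 1 -> dot b b = 1 -> dot a b = 0 ->
  v = comb a b (cross a b) (dot a v) (dot b v) (dot (cross a b) v).
Proof.
  intros; apply vec_eq; destruct a as [a1 a2 a3], b as [b1 b2 b3], v as [x y z];
  unfold dot, cross, comb in *; simpl in *; nsatz.
Qed.

Lemma triple M a b c :
  dot (cross (mv M a) (mv M b)) (mv M c) = det M * dot (cross a b) c.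
Proof. destruct M, a, b, c; unfold dot, cross, mv, det; simpl; ring. Qed.

Lemma isom_cross M a b : isom M -> dot a a = 1 -> dot b b = 1 -> dot a b = 0 ->
  mv M (cross a b) = cross (mv M a) (mv M b).
Proof.
  intros [HM dM] Ha Hb Hab.
  assert (HA : dot (mv M a) (mv M a) = 1) by (rewrite HM; auto).
  assert (HB : dot (mv M b) (mv M b) = 1) by (rewrite HM; auto).
  assert (HAB : dot (mv M a) (mv M b) = 0) by (rewrite HM; auto).
  rewrite (complete _ _ (mv M (cross a b)) HA HB HAB).
  rewrite !HM, triple, dM.
  assert (E1 : dot a (cross a b) = 0) by (destruct a, b; unfold dot, cross; simpl; ring).
  assert (E2 : dot b (cross a b) = 0) by (destruct a, b; unfold dot, cross; simpl; ring).
  assert (E3 : dot (cross a b) (cross a b) = dot a a * dot b b - dot a b * dot a b)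
    by (destruct a, b; unfold dot, cross; simpl; ring).
  rewrite E1, E2, E3, Ha, Hb, Hab.
  apply vec_eq; unfold comb; simpl; ring.
Qed.

Lemma agree2 M N a b : isom M -> isom N -> dot a a = 1 -> dot b b = 1 -> dot a b = 0 ->
  mv M a = mv N a -> mv M b = mv N b -> M = N.
Proof.
  intros HM HN Ha Hb Hab E1 E2. apply mat_ext; intros v.
  rewrite (complete a b v Ha Hb Hab), !mv_comb, !isom_cross by auto.
  rewrite E1, E2; reflexivity.
Qed.

Lemma rot_act phi u v : mv (rot_unit phi u) v =
  vadd (vscale (cos phi) v) (vadd (vscale (sin phi) (cross u v)) (vscale ((1 - cos phi) * dot u v) u)).
Proof. apply vec_eq; destruct u, v; unfold mv, rot_unit, dot, cross; simpl; ring. Qed.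

Lemma rot_e2 e1 e2 phi x1 x2 x3 : dot e1 e1 = 1 -> dot e2 e2 = 1 -> dot e1 e2 = 0 ->
  mv (rot_unit phi e2) (comb e1 e2 (cross e1 e2) x1 x2 x3) =
  comb e1 e2 (cross e1 e2) (cos phi * x1 + sin phi * x3) x2 (cos phi * x3 - sin phi * x1).
Proof.
  intros; apply vec_eq; destruct e1 as [a1 a2 a3], e2 as [b1 b2 b3];
  unfold dot, cross, comb, mv, rot_unit in *; simpl in *;
  set (C := cos phi) in *; set (S := sin phi) in *; nsatz.
Qed.
Lemma rot_e1 e1 e2 phi x1 x2 x3 : dot e1 e1 = 1 -> dot e2 e2 = 1 -> dot e1 e2 = 0 ->
  mv (rot_unit phi e1) (comb e1 e2 (cross e1 e2) x1 x2 x3) =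
  comb e1 e2 (cross e1 e2) x1 (cos phi * x2 - sin phi * x3) (cos phi * x3 + sin phi * x2).
Proof.
  intros; apply vec_eq; destruct e1 as [a1 a2 a3], e2 as [b1 b2 b3];
  unfold dot, cross, comb, mv, rot_unit in *; simpl in *;
  set (C := cos phi) in *; set (S := sin phi) in *; nsatz.
Qed.


Lemma cos_le_dec x y : 0 <= x -> x <= y -> y <= PI -> cos y <= cos x.
Proof.
  intros. destruct (Req_dec x y). subst; lra.
  left; apply cos_decreasing_1; lra.
Qed.


Module Calc.
From Coquelicot Require Import Coquelicot.
Lemma concC sg y : 0 <= sg <= 1 -> 0 <= y <= PI -> sg * sin y <= sin (sg * y).
Proof.
  intros Hs Hy. destruct (Req_dec y 0) as [->|Hy0].
  - rewrite Rmult_0_r, sin_0; lra.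
  - set (f := fun t => sin (sg * t) - sg * sin t).
    set (f' := fun t => sg * cos (sg * t) - sg * cos t).
    destruct (MVT_cor2 f f' 0 y) as [cc [E Hc]]; [lra| |].
    + intros cc Hc. apply is_derive_Reals. unfold f, f'. auto_derive; auto. ring.
    + unfold f, f' in E. rewrite Rmult_0_r, sin_0 in E.
      assert (cos cc <= cos (sg * cc)) by (apply cos_le_dec; nra).
      assert (0 <= (sg * cos (sg * cc) - sg * cos cc) * (y - 0)) by (apply Rmult_le_pos; nra).
      lra.
Qed.

End Calc.
Import Calc.


Lemma acos_le x th : -1 <= x <= 1 -> 0 <= th <= PI -> cos th <= x -> acos x <= th.
Proof.
  intros Hx Ht Hc. destruct (Rle_lt_dec (acos x) th) as [|Hlt]; auto.
  pose proof (acos_bound x).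
  assert (cos (acos x) < cos th) by (apply cos_decreasing_1; lra).
  rewrite cos_acos in H0 by auto. lra.
Qed.

Lemma keyK phi sg : 0 <= phi -> 0 <= sg <= 1 ->
  acos (1 - (1 - cos phi) * (sg * sg)) <= phi * sg.
Proof.
  intros Hp Hs. pose proof PI_RGT_0.
  pose proof (COS_bound phi).
  assert (Hx : -1 <= 1 - (1 - cos phi) * (sg * sg) <= 1) by nra.
  destruct (Rle_lt_dec PI (phi * sg)).
  - pose proof (acos_bound (1 - (1 - cos phi) * (sg * sg))); lra.
  - apply acos_le; auto; [nra|].
    assert (HH : (1 - cos phi) * (sg * sg) <= 1 - cos (phi * sg)); [|lra].
    destruct (Rle_lt_dec phi PI).
    + assert (E1 : cos phi = 1 - 2 * sin (phi/2) * sin (phi/2))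
        by (rewrite <- cos_2a_sin; f_equal; lra).
      assert (E2 : cos (phi * sg) = 1 - 2 * sin (sg * (phi/2)) * sin (sg * (phi/2)))
        by (rewrite <- cos_2a_sin; f_equal; lra).
      rewrite E1, E2.
      pose proof (concC sg (phi/2) Hs ltac:(lra)).
      assert (0 <= sin (phi/2)) by (apply sin_ge_0; lra).
      assert (0 <= sg * sin (phi/2)) by nra.
      assert ((sg * sin (phi/2)) * (sg * sin (phi/2)) <= sin (sg * (phi / 2)) * sin (sg * (phi / 2)))
        by (apply Rmult_le_compat; lra).
      nra.
    + assert (cos (phi * sg) <= cos (PI * sg)) by (apply cos_le_dec; nra).
      assert (E2 : cos (PI * sg) = 1 - 2 * sin (sg * (PI/2)) * sin (sg * (PI/2)))
        by (rewrite <- cos_2a_sin; f_equal; lra).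
      pose proof (concC sg (PI/2) Hs ltac:(lra)) as H3. rewrite sin_PI2 in H3.
      assert (sg * sg <= sin (sg * (PI / 2)) * sin (sg * (PI / 2)))
        by (apply Rmult_le_compat; lra).
      nra.
Qed.


Lemma dot_bound u v : dot u u = 1 -> dot v v = 1 -> -1 <= dot u v <= 1.
Proof.
  intros Hu Hv.
  assert (E : dot u v * dot u v + dot (cross u v) (cross u v) = dot u u * dot v v)
    by (destruct u, v; unfold dot, cross; simpl; ring).
  assert (0 <= dot (cross u v) (cross u v))
    by (destruct (cross u v); unfold dot; simpl; nra).
  rewrite Hu, Hv in E. nra.
Qed.

Lemma tri u v w : dot u u = 1 -> dot v v = 1 -> dot w w = 1 ->
  acos (dot u w) <= acos (dot u v) + acos (dot v w).
Proof.
  intros Hu Hv Hw.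
  pose proof (dot_bound u v Hu Hv) as Bx. pose proof (dot_bound v w Hv Hw) as By.
  pose proof (dot_bound u w Hu Hw) as Bz.
  assert (G : (1 - dot u v * dot u v) * (1 - dot v w * dot v w)
              - (dot u w - dot u v * dot v w) * (dot u w - dot u v * dot v w)
              = dot u (cross v w) * dot u (cross v w)).
  { assert (GI : dot u u * dot v v * dot w w + 2 * dot u v * dot v w * dot u w
       - dot u u * (dot v w * dot v w) - dot v v * (dot u w * dot u w) - dot w w * (dot u v * dot u v)
       = dot u (cross v w) * dot u (cross v w)).
    { destruct u as [a1 a2 a3], v as [b1 b2 b3], w as [c1 c2 c3];
      unfold dot, cross; simpl; ring. }
    rewrite Hu, Hv, Hw in GI. rewrite <- GI. ring. }
  set (x := dot u v) in *. set (y := dot v w) in *. set (z := dot u w) in *.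
  pose proof (acos_bound x). pose proof (acos_bound y). pose proof (acos_bound z).
  destruct (Rle_lt_dec PI (acos x + acos y)). lra.
  apply acos_le; auto; [lra|].
  rewrite cos_plus, !cos_acos, !sin_acos by auto.
  unfold Rsqr.
  assert (0 <= 1 - x * x) by nra. assert (0 <= 1 - y * y) by nra.
  set (P := sqrt (1 - x * x) * sqrt (1 - y * y)).
  assert (HP : P * P = (1 - x * x) * (1 - y * y)).
  { unfold P. replace (sqrt (1 - x * x) * sqrt (1 - y * y) * (sqrt (1 - x * x) * sqrt (1 - y * y)))
     with ((sqrt (1 - x * x) * sqrt (1 - x * x)) * (sqrt (1 - y * y) * sqrt (1 - y * y))) by ring.
    rewrite !sqrt_sqrt; auto. }
  assert (0 <= P) by (unfold P; apply Rmult_le_pos; apply sqrt_pos).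
  assert (0 <= dot u (cross v w) * dot u (cross v w)) by nra.
  nra.
Qed.


Lemma dot_comm u v : dot u v = dot v u.
Proof. destruct u, v; unfold dot; simpl; ring. Qed.
Lemma dot_lin X Y a b v : dot (lin X Y a b) v = a * dot X v + b * dot Y v.
Proof. destruct X, Y, v; unfold dot, lin; simpl; ring. Qed.
Lemma dot_scale_l k u v : dot (vscale k u) v = k * dot u v.
Proof. destruct u, v; unfold dot; simpl; ring. Qed.
Lemma dot_scale_r k u v : dot u (vscale k v) = k * dot u v.
Proof. destruct u, v; unfold dot; simpl; ring. Qed.
Lemma dot_pos v : 0 <= dot v v.
Proof. destruct v; unfold dot; simpl; nra. Qed.
Lemma dot_zero v : dot v v = 0 -> v = vzero.
Proof. destruct v; unfold dot, vzero; simpl; intros; f_equal; nra. Qed.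

Lemma dot_lin_lin X Y c a b : dot X X = 1 -> dot Y Y = 1 -> dot X Y = c ->
  dot (lin X Y a b) (lin X Y a b) = a * a + 2 * a * b * c + b * b.
Proof.
  intros hX hY hc. rewrite dot_lin, !(dot_comm _ (lin X Y a b)), !dot_lin, hX, hY,
    (dot_comm Y X), hc. ring.
Qed.

Lemma unit_of_nonzero C : C <> vzero ->
  0 < vnorm C /\ dot (vscale (/ vnorm C) C) (vscale (/ vnorm C) C) = 1.
Proof.
  intros HC. assert (Hp : 0 < dot C C).
  { destruct (dot_pos C) as [|E]; auto. exfalso; apply HC, dot_zero; auto. }
  unfold vnorm. pose proof (sqrt_lt_R0 _ Hp). split; auto.
  rewrite dot_scale_l, dot_scale_r.
  rewrite <- (sqrt_sqrt (dot C C)) at 3 by lra. field. lra.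
Qed.

Lemma rot_isom t C : C <> vzero -> isom (rot t C).
Proof. intros HC. destruct (unit_of_nonzero C HC). unfold rot. apply isom_rot; auto. Qed.

Lemma letter_bound X Y c s a b t : dot X X = 1 -> dot Y Y = 1 -> dot X Y = c ->
  s * s + c * c = 1 -> 0 < s -> 0 <= t -> lin X Y a b <> vzero ->
  acos (dot Y (mv (rot t (lin X Y a b)) Y)) <= t * Rabs a * s.
Proof.
  intros hX hY hc hs hs0 ht HC.
  destruct (unit_of_nonzero _ HC) as [Hn Hu].
  pose proof (dot_lin_lin X Y c a b hX hY hc) as Hn2.
  set (C := lin X Y a b) in *. set (n := vnorm C) in *.
  assert (Hnn : n * n = a * a + 2 * a * b * c + b * b).
  { unfold n, vnorm. rewrite sqrt_sqrt; auto. apply dot_pos. }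
  set (u := vscale (/ n) C) in *.
  unfold rot. fold n. fold u. set (phi := t * n).
  rewrite rot_act.
  assert (E : forall a1 a2 a3, dot Y (vadd (vscale a1 Y) (vadd (vscale a2 (cross u Y)) (vscale a3 u)))
     = a1 * dot Y Y + a3 * dot Y u).
  { intros. destruct Y, u; unfold dot, cross; simpl; ring. }
  rewrite E, hY.
  assert (Yu : dot Y u = / n * (a * c + b)).
  { unfold u. rewrite dot_scale_r, dot_comm. unfold C. rewrite dot_lin, hY, hc. ring. }
  rewrite dot_comm in Yu. rewrite (dot_comm Y u), Yu.
  assert (Ha2 : Rabs a * Rabs a = a * a) by (unfold Rabs; destruct Rcase_abs; ring).
  set (sg := Rabs a * s / n).
  assert (Hsg2 : sg * sg = (a * a) * (s * s) / (n * n)).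
  { unfold sg. rewrite <- Ha2. field. lra. }
  assert (Hsg0 : 0 <= sg) by (unfold sg; apply Rmult_le_pos; [apply Rmult_le_pos; [apply Rabs_pos|lra] | left; apply Rinv_0_lt_compat; lra]).
  assert (K1 : (a * c + b) * (a * c + b) + a * a * (s * s) = n * n).
  { rewrite Hnn. replace (s * s) with (1 - c * c) by lra. ring. }
  assert (E1 : sg * sg = 1 - ((a * c + b) * (a * c + b)) / (n * n)).
  { rewrite Hsg2. replace (a * a * (s * s)) with (n * n - (a * c + b) * (a * c + b)) by lra.
    field. lra. }
  assert (Hsg1 : sg * sg <= 1).
  { assert (0 < n * n) by (apply Rmult_lt_0_compat; lra).
    assert (0 <= ((a * c + b) * (a * c + b)) / (n * n)).
    { unfold Rdiv; apply Rmult_le_pos; [apply Rle_0_sqr| left; apply Rinv_0_lt_compat; lra]. }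
    lra. }
  assert (sg <= 1) by nra.
  replace (cos phi * 1 + (1 - cos phi) * (/ n * (a * c + b)) * (/ n * (a * c + b)))
    with (1 - (1 - cos phi) * (sg * sg)).
  2:{
      assert (K2 : / n * (a * c + b) * (/ n * (a * c + b)) = 1 - sg * sg).
      { rewrite E1. field. lra. }
      rewrite Rmult_assoc, K2. ring. }
  replace (t * Rabs a * s) with (phi * sg) by (unfold phi, sg; field; lra).
  apply keyK; [unfold phi; nra | lra].
Qed.


Lemma word_bound X Y c s : dot X X = 1 -> dot Y Y = 1 -> dot X Y = c ->
  s * s + c * c = 1 -> 0 < s -> forall w : word,
  (forall l, In l w -> 0 <= fst l /\ lin X Y (fst (snd l)) (snd (snd l)) <> vzero) ->
  dot (mv (eval_word X Y w) Y) (mv (eval_word X Y w) Y) = 1 /\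
  acos (dot Y (mv (eval_word X Y w) Y)) <= s * cost_word 0 w.
Proof.
  intros hX hY hc hs hs0 w. induction w as [|[t [a b]] w IH]; intros Hw.
  - simpl. rewrite mv_id, hY, acos_1. split; lra.
  - destruct IH as [Hq Hb]. { intros l Hl; apply Hw; simpl; auto. }
    destruct (Hw (t, (a, b))) as [Ht HC]; [simpl; auto|]. simpl in Ht, HC.
    simpl eval_word. simpl cost_word. rewrite mv_mul.
    set (q := mv (eval_word X Y w) Y) in *.
    pose proof (rot_isom t _ HC) as [HR _].
    split. { rewrite HR; auto. }
    pose proof (tri Y (mv (rot t (lin X Y a b)) Y) (mv (rot t (lin X Y a b)) q) hY
       ltac:(rewrite HR; auto) ltac:(rewrite HR; auto)) as T.
    rewrite HR in T.
    pose proof (letter_bound X Y c s a b t hX hY hc hs hs0 Ht HC).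
    nra.
Qed.

Lemma optimal_of X Y c s g w : dot X X = 1 -> dot Y Y = 1 -> dot X Y = c ->
  s * s + c * c = 1 -> 0 < s -> is_decomposition X Y g w ->
  cost_word 0 w <= acos (dot Y (mv g Y)) / s -> optimal 0 X Y g w.
Proof.
  intros hX hY hc hs hs0 Hd Hc. split; auto.
  intros w' [Hw' E]. destruct (word_bound X Y c s hX hY hc hs hs0 w' Hw') as [_ B].
  rewrite E in B. apply Rle_trans with (1 := Hc).
  apply Rmult_le_reg_r with s; auto. unfold Rdiv. rewrite Rmult_assoc, Rinv_l by lra. lra.
Qed.


Lemma ang x y : x * x + y * y = 1 -> exists th, -PI <= th <= PI /\ cos th = x /\ sin th = y.
Proof.
  intros H. assert (Hx : -1 <= x <= 1) by nra.
  pose proof (acos_bound x).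
  assert (Hs : sin (acos x) = Rabs y).
  { rewrite sin_acos by auto. replace (1 - x²) with (Rsqr y) by (unfold Rsqr; lra).
    apply sqrt_Rsqr_abs. }
  destruct (Rle_lt_dec 0 y).
  - exists (acos x). rewrite cos_acos, Hs, Rabs_right by (auto; lra). repeat split; lra.
  - exists (- acos x). rewrite cos_neg, sin_neg, cos_acos, Hs, Rabs_left by auto.
    repeat split; lra.
Qed.

Lemma dot_comb_r v e1 e2 e3 x1 x2 x3 :
  dot v (comb e1 e2 e3 x1 x2 x3) = x1 * dot v e1 + x2 * dot v e2 + x3 * dot v e3.
Proof. destruct v, e1, e2, e3; unfold dot, comb; simpl; ring. Qed.

Lemma comb_eq e1 e2 e3 x1 x2 x3 y1 y2 y3 : x1 = y1 -> x2 = y2 -> x3 = y3 ->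
  comb e1 e2 e3 x1 x2 x3 = comb e1 e2 e3 y1 y2 y3.
Proof. intros; subst; reflexivity. Qed.

Lemma rot_by_vec t v u k : v = vscale k u -> dot u u = 1 -> 0 < k ->
  rot t v = rot_unit (t * k) u.
Proof.
  intros -> Hu Hk. unfold rot, vnorm.
  rewrite dot_scale_l, dot_scale_r, Hu, Rmult_1_r, sqrt_square by lra.
  f_equal. apply vec_eq; destruct u; simpl; field; lra.
Qed.

Lemma rot_unit_negv t u : rot_unit t (vscale (-1) u) = rot_unit (- t) u.
Proof. destruct u; unfold rot_unit; simpl; rewrite cos_neg, sin_neg; f_equal; ring. Qed.

Definition linL X Y c l := lin X Y (fst (label_coeffs 0 c l)) (snd (label_coeffs 0 c l)).

Lemma rotY X Y c bb t : dot Y Y = 1 ->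
  rot t (linL X Y c (bb, BY)) = rot_unit (if bb then - t else t) Y.
Proof.
  intros hY. destruct bb.
  - rewrite (rot_by_vec t _ (vscale (-1) Y) 1).
    + rewrite Rmult_1_r, rot_unit_negv; reflexivity.
    + apply vec_eq; unfold linL; destruct X, Y; simpl; ring.
    + rewrite dot_scale_l, dot_scale_r, hY; ring.
    + lra.
  - rewrite (rot_by_vec t _ Y 1); auto; [rewrite Rmult_1_r; reflexivity| |lra].
    apply vec_eq; unfold linL; destruct X, Y; simpl; ring.
Qed.

Lemma costY c bb : Rabs (fst (label_coeffs 0 c (bb, BY))) = 0.
Proof. destruct bb; simpl; rewrite ?Ropp_0; apply Rabs_R0. Qed.

Lemma linY_nz X Y c bb : dot Y Y = 1 -> linL X Y c (bb, BY) <> vzero.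
Proof.
  intros hY E. assert (dot (linL X Y c (bb, BY)) (linL X Y c (bb, BY)) = 1).
  { unfold linL; destruct bb; simpl; destruct X, Y; unfold dot, lin in *; simpl in *; nra. }
  rewrite E in H. unfold dot, vzero in H; simpl in H. lra.
Qed.

Lemma Wh_unit X Y c s : dot X X = 1 -> dot Y Y = 1 -> dot X Y = c ->
  s * s + c * c = 1 -> 0 < s ->
  dot (vscale (/ s) (lin X Y 1 (- c))) (vscale (/ s) (lin X Y 1 (- c))) = 1.
Proof.
  intros hX hY hc hs hs0. rewrite dot_scale_l, dot_scale_r, (dot_lin_lin X Y c) by auto.
  replace (1 * 1 + 2 * 1 * - c * c + - c * - c) with (s * s) by nra.
  field. lra.
Qed.

Lemma rotW X Y c s t l : dot X X = 1 -> dot Y Y = 1 -> dot X Y = c ->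
  s * s + c * c = 1 -> 0 < s -> (l = (false, BWp) \/ l = (false, BWm)) ->
  rot t (linL X Y c l) = rot_unit (t * s) (vscale (/ s) (lin X Y 1 (- c))).
Proof.
  intros hX hY hc hs hs0 Hl. apply rot_by_vec; auto; [|apply Wh_unit; auto].
  apply vec_eq; unfold linL; destruct Hl; subst; destruct X, Y; simpl; field; lra.
Qed.

Lemma costW c l : (l = (false, BWp) \/ l = (false, BWm)) -> Rabs (fst (label_coeffs 0 c l)) = 1.
Proof.
  intros [-> | ->]; simpl; [replace (1 + 0 * c) with 1 by ring | replace (1 - 0 * c) with 1 by ring];
  apply Rabs_R1.
Qed.

Lemma linW_nz X Y c s l : dot X X = 1 -> dot Y Y = 1 -> dot X Y = c ->
  s * s + c * c = 1 -> 0 < s -> (l = (false, BWp) \/ l = (false, BWm)) ->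
  linL X Y c l <> vzero.
Proof.
  intros hX hY hc hs hs0 Hl E.
  assert (E2 : linL X Y c l = lin X Y 1 (- c)).
  { apply vec_eq; unfold linL; destruct Hl; subst; destruct X, Y; simpl; ring. }
  rewrite E2 in E. pose proof (dot_lin_lin X Y c 1 (- c) hX hY hc). rewrite E in H.
  unfold dot, vzero in H; simpl in H. nra.
Qed.

Lemma finish X Y c s g la lw lb ta t tb : dot X X = 1 -> dot Y Y = 1 -> dot X Y = c ->
  s * s + c * c = 1 -> 0 < s ->
  0 <= ta -> 0 <= t -> 0 <= tb ->
  linL X Y c la <> vzero -> linL X Y c lw <> vzero -> linL X Y c lb <> vzero ->
  Rabs (fst (label_coeffs 0 c la)) = 0 -> Rabs (fst (label_coeffs 0 c lw)) = 1 ->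
  Rabs (fst (label_coeffs 0 c lb)) = 0 ->
  g = mat_mul (rot ta (linL X Y c la)) (mat_mul (rot t (linL X Y c lw)) (rot tb (linL X Y c lb))) ->
  t <= acos (dot Y (mv g Y)) / s ->
  optimal 0 X Y g [(ta, label_coeffs 0 c la); (t, label_coeffs 0 c lw); (tb, label_coeffs 0 c lb)].
Proof.
  intros hX hY hc hs hs0 H1 H2 H3 N1 N2 N3 C1 C2 C3 Eg Ht.
  apply (optimal_of X Y c s); auto.
  - split.
    + intros l Hl. simpl in Hl. destruct Hl as [<-|[<-|[<-|[]]]]; simpl; split; auto.
    + unfold eval_word; cbn [fold_right fst snd]. rewrite mat_mul_id_r. rewrite Eg. reflexivity.
  - unfold cost_word; cbn [fold_right fst snd]. rewrite C1, C2, C3. lra.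
Qed.


Lemma coords p1 p2 p3 q1 q2 q3 :
  p1 * p1 + p2 * p2 + p3 * p3 = 1 -> q1 * q1 + q2 * q2 + q3 * q3 = 1 ->
  p1 * q1 + p2 * q2 + p3 * q3 = 0 ->
  exists a b, -PI <= a <= PI /\ -PI <= b <= PI /\
   sin a * sin (acos p2) = p1 /\ cos (acos p2) = p2 /\ cos a * sin (acos p2) = p3 /\
   cos a * sin b + sin a * cos (acos p2) * cos b = q1 /\ - sin (acos p2) * cos b = q2 /\
   cos a * cos (acos p2) * cos b - sin a * sin b = q3.
Proof.
  intros Hp Hq Hpq.
  assert (Hb2 : -1 <= p2 <= 1) by nra.
  rewrite cos_acos by auto. rewrite sin_acos by auto. unfold Rsqr.
  set (sb := sqrt (1 - p2 * p2)).
  assert (Hsb : sb * sb = p1 * p1 + p3 * p3).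
  { unfold sb. rewrite sqrt_sqrt; nra. }
  assert (Hsb0 : 0 <= sb) by apply sqrt_pos.
  destruct Hsb0 as [Hpos | Hz].
  - destruct (ang (p3 / sb) (p1 / sb)) as [a [Ha [ca sa]]].
    { replace (p3 / sb * (p3 / sb) + p1 / sb * (p1 / sb)) with ((p1 * p1 + p3 * p3) / (sb * sb))
        by (field; lra). rewrite <- Hsb. field. lra. }
    destruct (ang (- q2 / sb) ((q1 * p3 - q3 * p1) / sb)) as [b [Hb [cb sbb]]].
    { assert (L0 : (q1 * p3 - q3 * p1) * (q1 * p3 - q3 * p1) =
         (q1 * q1 + q3 * q3) * (p1 * p1 + p3 * p3) - (q1 * p1 + q3 * p3) * (q1 * p1 + q3 * p3)) by ring.
      replace (q1 * q1 + q3 * q3) with (1 - q2 * q2) in L0 by lra.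
      replace (q1 * p1 + q3 * p3) with (- (p2 * q2)) in L0 by lra.
      rewrite <- Hsb in L0.
      replace (- q2 / sb * (- q2 / sb) + (q1 * p3 - q3 * p1) / sb * ((q1 * p3 - q3 * p1) / sb))
        with ((q2 * q2 + (q1 * p3 - q3 * p1) * (q1 * p3 - q3 * p1)) / (sb * sb)) by (field; lra).
      rewrite L0. assert (E : sb * sb = 1 - p2 * p2) by (unfold sb; rewrite sqrt_sqrt; nra).
      apply Rmult_eq_reg_r with (sb * sb); [|nra]. unfold Rdiv. rewrite Rmult_assoc, Rinv_l by nra.
      rewrite E. ring. }
    assert (HQ : p2 * q2 = - (p1 * q1 + p3 * q3)) by lra.
    exists a, b. rewrite ca, sa, cb, sbb. repeat split; try lra.
    + field; lra.
    + field; lra.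
    + replace (p3 / sb * ((q1 * p3 - q3 * p1) / sb) + p1 / sb * p2 * (- q2 / sb))
        with ((p3 * (q1 * p3 - q3 * p1) - p1 * (p2 * q2)) / (sb * sb)) by (field; lra).
      rewrite HQ, Hsb. field. nra.
    + field; lra.
    + replace (p3 / sb * p2 * (- q2 / sb) - p1 / sb * ((q1 * p3 - q3 * p1) / sb))
        with ((- p3 * (p2 * q2) - p1 * (q1 * p3 - q3 * p1)) / (sb * sb)) by (field; lra).
      rewrite HQ, Hsb. field. nra.
  - rewrite <- Hz in *.
    assert (p1 = 0) by nra. assert (p3 = 0) by nra. subst p1 p3.
    assert (Hp22 : p2 * p2 = 1) by lra. assert (q2 = 0) by nra. subst q2.
    destruct (ang (p2 * q3) q1) as [b [Hb [cb sbb]]]. { nra. }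
    exists 0, b. rewrite cos_0, sin_0, cb, sbb. repeat split; try lra. replace (1 * p2 * (p2 * q3) - 0 * q1) with ((p2 * p2) * q3) by ring. rewrite Hp22; ring.
Qed.


Lemma decomp g e1 e2 : isom g -> dot e1 e1 = 1 -> dot e2 e2 = 1 -> dot e1 e2 = 0 ->
  exists a b, -PI <= a <= PI /\ -PI <= b <= PI /\
  g = mat_mul (rot_unit a e2) (mat_mul (rot_unit (acos (dot e2 (mv g e2))) e1) (rot_unit b e2)).
Proof.
  intros Hgi H1 H2 H12. pose proof Hgi as [Hg dg].
  assert (HZ : dot (cross e1 e2) (cross e1 e2) = 1).
  { assert (E3 : dot (cross e1 e2) (cross e1 e2) = dot e1 e1 * dot e2 e2 - dot e1 e2 * dot e1 e2)
      by (destruct e1, e2; unfold dot, cross; simpl; ring).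
    rewrite E3, H1, H2, H12; ring. }
  assert (H2Z : dot e2 (cross e1 e2) = 0) by (destruct e1, e2; unfold dot, cross; simpl; ring).
  set (p := mv g e2). set (q := mv g (cross e1 e2)).
  pose proof (complete e1 e2 p H1 H2 H12) as Cp.
  pose proof (complete e1 e2 q H1 H2 H12) as Cq.
  assert (hp : dot p p = 1) by (unfold p; rewrite Hg; auto).
  assert (hq : dot q q = 1) by (unfold q; rewrite Hg; auto).
  assert (hpq : dot p q = 0) by (unfold p, q; rewrite Hg; auto).
  pose proof (f_equal (dot p) Cp) as R1. pose proof (f_equal (dot p) Cq) as R2.
  pose proof (f_equal (dot q) Cq) as R3.
  rewrite dot_comb_r in R1, R2, R3.
  rewrite (dot_comm p e1), (dot_comm p e2), (dot_comm p (cross e1 e2)), hp in R1.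
  rewrite (dot_comm p e1), (dot_comm p e2), (dot_comm p (cross e1 e2)), hpq in R2.
  rewrite (dot_comm q e1), (dot_comm q e2), (dot_comm q (cross e1 e2)), hq in R3.
  destruct (coords (dot e1 p) (dot e2 p) (dot (cross e1 e2) p) (dot e1 q) (dot e2 q) (dot (cross e1 e2) q))
    as [a [b [Ha [Hb [F1 [F2 [F3 [F4 [F5 F6]]]]]]]]]; try lra.
  exists a, b. split; auto. split; auto.
  set (be := acos (dot e2 p)) in *.
  set (N := mat_mul (rot_unit a e2) (mat_mul (rot_unit be e1) (rot_unit b e2))).
  assert (HN : isom N).
  { unfold N; apply isom_mul; [|apply isom_mul]; apply isom_rot; auto. }
  assert (NC : forall x1 x2 x3, mv N (comb e1 e2 (cross e1 e2) x1 x2 x3) =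
     comb e1 e2 (cross e1 e2)
       (cos a * (cos b * x1 + sin b * x3) + sin a * (cos be * (cos b * x3 - sin b * x1) + sin be * x2))
       (cos be * x2 - sin be * (cos b * x3 - sin b * x1))
       (cos a * (cos be * (cos b * x3 - sin b * x1) + sin be * x2) - sin a * (cos b * x1 + sin b * x3))).
  { intros. unfold N. rewrite !mv_mul, rot_e2, rot_e1, rot_e2 by auto.
    apply comb_eq; ring. }
  apply (agree2 g N e2 (cross e1 e2)); auto.
  - replace (mv N e2) with (mv N (comb e1 e2 (cross e1 e2) 0 1 0)).
    2:{ f_equal. apply vec_eq; unfold comb; simpl; ring. }
    rewrite NC. fold p. rewrite Cp at 1. apply comb_eq; lra.
  - replace (mv N (cross e1 e2)) with (mv N (comb e1 e2 (cross e1 e2) 0 0 1)).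
    2:{ f_equal. apply vec_eq; unfold comb; simpl; ring. }
    rewrite NC. fold q. rewrite Cq at 1. apply comb_eq; lra.
Qed.


Theorem theorem2p4 (X Y : vec) (alpha : R)
  (hX : dot X X = 1) (hY : dot Y Y = 1)
  (halpha : 0 < alpha <= PI / 2) (hangle : dot X Y = cos alpha)
  (g : mat) (hg : in_SO3 g) :
  exists w : word,
    optimal 0 X Y g w /\
    exists (t : R) (sigma : label -> label) (P : R -> pattern),
      0 <= t /\ In sigma sym_group /\ In P [patternIX; patternX] /\
      subword w (interp 0 (cos alpha) (apply_sym sigma (P t))).
Proof.
  assert (hs : sin alpha * sin alpha + cos alpha * cos alpha = 1).
  { pose proof (sin2_cos2 alpha) as H. unfold Rsqr in H. exact H. }
  assert (hs0 : 0 < sin alpha) by (apply sin_gt_0; pose proof PI_RGT_0; lra).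
  set (c := cos alpha) in *. set (s := sin alpha) in *.
  set (Wh := vscale (/ s) (lin X Y 1 (- c))).
  assert (HWh : dot Wh Wh = 1) by (apply (Wh_unit X Y c s); auto).
  assert (HWY : dot Wh Y = 0).
  { unfold Wh. rewrite dot_scale_l, dot_lin, hY, hangle. ring. }
  destruct (decomp g Wh Y (isom_SO3 g hg) HWh hY HWY) as [a [b [Ha [Hb Eg]]]].
  set (be := acos (dot Y (mv g Y))) in *.
  pose proof (acos_bound (dot Y (mv g Y))) as Hbe. fold be in Hbe.
  set (t := be / s).
  assert (Ht : 0 <= t) by (unfold t; apply Rmult_le_pos; [lra | left; apply Rinv_0_lt_compat; lra]).
  assert (Hts : t * s = be) by (unfold t; field; lra).
  assert (RW : forall l, (l = (false, BWp) \/ l = (false, BWm)) -> rot t (linL X Y c l) = rot_unit be Wh).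
  { intros l Hl. rewrite (rotW X Y c s t l); auto. rewrite Hts. reflexivity. }
  assert (Ht' : t <= acos (dot Y (mv g Y)) / s) by (unfold t, be; lra).
  destruct (Rle_lt_dec 0 a) as [Ha0 | Ha0]; destruct (Rle_lt_dec 0 b) as [Hb0 | Hb0].
  - exists [(a, label_coeffs 0 c (false, BY)); (t, label_coeffs 0 c (false, BWp));
            (b, label_coeffs 0 c (false, BY))].
    split.
    + apply (finish X Y c s g); auto using linY_nz, costY.
      * apply (linW_nz X Y c s); auto.
      * apply costW; auto.
      * rewrite !rotY, RW by auto. exact Eg.
    + exists t, (fun l => l), patternIX. split; [lra|]. split; [simpl; auto|]. split; [simpl; auto|].
      right. exists nil, ((t, label_coeffs 0 c (false, BWp)) :: nil), nil, PI, (label_coeffs 0 c (false, BY)),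
        PI, (label_coeffs 0 c (false, BY)), a, b.
      split; [reflexivity|]. split; [lra|]. split; [lra|]. reflexivity.
  - exists [(a, label_coeffs 0 c (false, BY)); (t, label_coeffs 0 c (false, BWp));
            (- b, label_coeffs 0 c (true, BY))].
    split.
    + apply (finish X Y c s g); auto using linY_nz, costY; try lra.
      * apply (linW_nz X Y c s); auto.
      * apply costW; auto.
      * rewrite !rotY, RW, Ropp_involutive by auto. exact Eg.
    + exists t, (fun l => l), patternX. split; [lra|]. split; [simpl; auto|]. split; [simpl; auto|].
      right. exists nil, ((t, label_coeffs 0 c (false, BWp)) :: nil), nil, PI, (label_coeffs 0 c (false, BY)),
        PI, (label_coeffs 0 c (true, BY)), a, (- b).
      split; [reflexivity|]. split; [lra|]. split; [lra|]. reflexivity.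
  - exists [(- a, label_coeffs 0 c (true, BY)); (t, label_coeffs 0 c (false, BWm));
            (b, label_coeffs 0 c (false, BY))].
    split.
    + apply (finish X Y c s g); auto using linY_nz, costY; try lra.
      * apply (linW_nz X Y c s); auto.
      * apply costW; auto.
      * rewrite !rotY, RW, Ropp_involutive by auto. exact Eg.
    + exists t, rho, patternX. split; [lra|]. split; [simpl; auto|]. split; [simpl; auto|].
      right. exists nil, ((t, label_coeffs 0 c (false, BWm)) :: nil), nil, PI, (label_coeffs 0 c (true, BY)),
        PI, (label_coeffs 0 c (false, BY)), (- a), b.
      split; [reflexivity|]. split; [lra|]. split; [lra|]. reflexivity.
  - exists [(- a, label_coeffs 0 c (true, BY)); (t, label_coeffs 0 c (false, BWm));
            (- b, label_coeffs 0 c (true, BY))].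
    split.
    + apply (finish X Y c s g); auto using linY_nz, costY; try lra.
      * apply (linW_nz X Y c s); auto.
      * apply costW; auto.
      * rewrite !rotY, RW, !Ropp_involutive by auto. exact Eg.
    + exists t, rho, patternIX. split; [lra|]. split; [simpl; auto|]. split; [simpl; auto|].
      right. exists nil, ((t, label_coeffs 0 c (false, BWm)) :: nil), nil, PI, (label_coeffs 0 c (true, BY)),
        PI, (label_coeffs 0 c (true, BY)), (- a), (- b).
      split; [reflexivity|]. split; [lra|]. split; [lra|]. reflexivity.
Qed.
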